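(* Let $d\ge 1$ and $2\le n_1\le n_2\le\cdots\le n_d$ be integers, and let $G=P_{n_1}\times P_{n_2}\times\cdots\times P_{n_d}$. Then $$\sigma_T(G)\le 2\left(\left\lfloor\tfrac{n_1}{2}\right\rfloor+\left\lfloor\tfrac{n_2}{2}\right\rfloor+\cdots+\left\lfloor\tfrac{n_{d-1}}{2}\right\rfloor\right)+1.$$
   Context: $P_n$ is the path on $n$ vertices and $\times$ is the Cartesian product, so $G$ is the $d$-dimensional grid with vertex set $\{(x_1,\dots,x_d): x_i\in\{1,\dots,n_i\}\}$, two vertices adjacent iff they differ by $1$ in exactly one coordinate and agree in all others. For a spanning tree $T$ of a connected graph $G$, $d_T(u,v)$ is the distance between $u$ and $v$ in $T$, $\sigma_T(G,T):=\max_{uv\in E(G)} d_T(u,v)$, and $\sigma_T(G):=\min\{\sigma_T(G,T): T \text{ a spanning tree of } G\}$. An empty sum is $0$. *)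

(* Defs.v *)
From mathcomp Require Import all_boot.
From Stdlib Require Import Classical ClassicalEpsilon.
Set Implicit Arguments. Unset Strict Implicit. Unset Printing Implicit Defensive.

(* Vertices of the grid P_{n_0} x ... x P_{n_{d-1}} (0-indexed coordinates,
   coordinate i ranges over {0,...,n i - 1}, a shift of {1,...,n_i}). *)
Definition gridV (d : nat) (n : nat -> nat) : finType :=
  {dffun forall i : 'I_d, 'I_(n i)}.

Definition grid_adj d n (x y : gridV d n) : bool :=
  [exists i : 'I_d,
     ((val (x i) == (val (y i)).+1) || (val (y i) == (val (x i)).+1)) &&
     [forall j : 'I_d, (j != i) ==> (val (x j) == val (y j))]].

Definition pbool (P : Prop) : bool :=
  if excluded_middle_informative P then true else false.

Section Trees.
Variable V : finType.

(* A subgraph given by an edge set of ordered pairs (required symmetric). *)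
Definition erel (E : {set V * V}) : rel V := fun u v => (u, v) \in E.

Definition has_cycle (e : rel V) : Prop :=
  exists c : seq V, [/\ 3 <= size c, uniq c & cycle e c].

Definition spanning_tree (adj : rel V) (E : {set V * V}) : Prop :=
  [/\ (forall u v, erel E u v = erel E v u),
      (forall u v, erel E u v -> adj u v),
      (forall u v, connect (erel E) u v) &
      ~ has_cycle (erel E)].

Definition walk_len (e : rel V) (u v : V) (k : nat) : bool :=
  [exists p : k.-tuple V, path e u p && (last u p == v)].

(* Graph distance: least k with a walk of length k (#|V| if unreachable,
   which never happens for a connected subgraph). *)
Definition gdist (e : rel V) (u v : V) : nat :=
  find (walk_len e u v) (iota 0 #|V|).

Definition stretch (adj : rel V) (E : {set V * V}) : nat :=
  \max_(p : V * V | adj p.1 p.2) gdist (erel E) p.1 p.2.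

(* sigma_T(G) = min over spanning trees T of sigma_T(G, T)
   (default #|V| is irrelevant: connected graphs have spanning trees). *)
Definition tree_stretch (adj : rel V) : nat :=
  \big[minn/#|V|]_(E : {set V * V} | pbool (spanning_tree adj E)) stretch adj E.
End Trees.

(* Main.v *)
Require Import Defs.
From mathcomp Require Import all_boot.
From mathcomp Require Import zify.
From Stdlib Require Import ClassicalEpsilon.
Set Implicit Arguments. Unset Strict Implicit. Unset Printing Implicit Defensive.

Section Walks.
Variable V : finType.
Implicit Types (e : rel V) (u v w : V).

Lemma walkP e u v k : reflect (exists s : seq V, [/\ size s = k, path e u s & last u s = v])
  (walk_len e u v k).
Proof.
apply: (iffP existsP) => [[p /andP[hp /eqP hl]]|[s [hs hp hl]]].
  by exists (val p); split => //; exact: size_tuple.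
have hs' : size s == k by rewrite hs.
by exists (Tuple hs'); rewrite /= hp hl eqxx.
Qed.

Lemma walk0 e u : walk_len e u u 0.
Proof. by apply/walkP; exists [::]. Qed.

Lemma walk1 e u v : e u v -> walk_len e u v 1.
Proof. by move=> h; apply/walkP; exists [:: v]; rewrite /= h. Qed.

Lemma walk_cat e u v w k l : walk_len e u v k -> walk_len e v w l -> walk_len e u w (k + l).
Proof.
move=> /walkP[s1 [h1 p1 l1]] /walkP[s2 [h2 p2 l2]]; apply/walkP; exists (s1 ++ s2).
by rewrite size_cat cat_path last_cat p1 l1 p2 l2 h1 h2.
Qed.

Lemma gdist_le e u v k : walk_len e u v k -> gdist e u v <= k.
Proof.
move=> h; rewrite /gdist; case: (ltnP k #|V|) => hk.
  rewrite leqNgt; apply/negP => hlt; have := before_find 0 hlt.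
  by rewrite nth_iota // add0n h.
by apply: leq_trans (find_size _ _) _; rewrite size_iota.
Qed.
End Walks.

Lemma bigmin_le (T : eqType) (s : seq T) (P : pred T) (F : T -> nat) x0 y :
  y \in s -> P y -> \big[minn/x0]_(i <- s | P i) F i <= F y.
Proof.
elim: s => //= a s IH; rewrite in_cons big_cons => /orP[/eqP <-|hy] hP.
  by rewrite hP geq_minl.
case: (P a); last exact: IH.
by apply: leq_trans (geq_minr _ _) (IH hy hP).
Qed.

Lemma sum_but_last (F : nat -> nat) D (l : 'I_D) : val l = D.-1 ->
  \sum_(j < D | j != l) F j = \sum_(i < D.-1) F i.
Proof.
move=> hl; move: l hl; case: D => [|D] l hl; first by move: hl; case: l.
rewrite big_mkcond big_ord_recr /=.
have -> : (ord_max != l) = false.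
  by apply/negbTE; rewrite negbK; apply/eqP/val_inj; rewrite hl.
rewrite addn0; apply: eq_bigr => i _.
have -> // : (widen_ord (leqnSn D) i != l).
by rewrite -(inj_eq val_inj) hl /= neq_ltn ltn_ord.
Qed.

Lemma valO k (o : 'I_k) : val o = nat_of_ord o. Proof. by []. Qed.

Section Grid.
Variables (d : nat) (n : nat -> nat).
Hypothesis hd : 0 < d.
Hypothesis hn : forall j : 'I_d, 0 < n j.
Local Notation V := (gridV d n).

Definition mk (x : V) (g : 'I_d -> nat) : V :=
  @finfun _ (fun j : 'I_d => 'I_(n j)) (fun j : 'I_d => insubd (x j) (g j)).
Lemma mkE x (g : 'I_d -> nat) (j : 'I_d) : g j < n j -> nat_of_ord (mk x g j) = g j.
Proof. move=> h. by rewrite /mk ffunE val_insubd h. Qed.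

Lemma eq_grid (x y : V) : (forall j, nat_of_ord (x j) = nat_of_ord (y j)) -> x = y.
Proof. by move=> h; apply/ffunP => j; apply/val_inj; exact: h. Qed.

Definition upd (x : V) (i : 'I_d) (v : nat) : V :=
  mk x (fun k => if k == i then v else nat_of_ord (x k)).
Lemma updE (x : V) (i : 'I_d) (v : nat) (k : 'I_d) : v < n i -> nat_of_ord (upd x i v k) = if k == i then v else nat_of_ord (x k).
Proof. by move=> h; rewrite mkE //; case: eqP => [->|_] //; exact: ltn_ord. Qed.

Lemma dlP : d.-1 < d. Proof. by move: hd; lia. Qed.
Definition dl : 'I_d := Ordinal dlP.
Definition c (j : 'I_d) : nat := (n j).-1 %/ 2.
Lemma c_lt (j : 'I_d) : c j < n j. Proof. by move: (hn j); rewrite /c; lia. Qed.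
Definition dis (a b : nat) := (a - b) + (b - a).
Definition off (x : V) (j : 'I_d) := (j != dl) && (nat_of_ord (x j) != c j).
Definition mv (x : V) (j : 'I_d) : nat := if nat_of_ord (x j) < c j then (x j).+1 else (x j).-1.
Lemma mv_lt (x : V) (j : 'I_d) : mv x j < n j.
Proof. move: (c_lt j) (ltn_ord (x j)); rewrite /mv; case: (ltnP (x j) (c j)); lia. Qed.
Lemma mv_dis (x : V) (j : 'I_d) : off x j -> (dis (mv x j) (c j)).+1 = dis (x j) (c j).
Proof. by case/andP => _ /eqP h; rewrite /mv /dis; case: (ltnP (x j) (c j)); lia. Qed.
Lemma pred_lt (x : V) j : (nat_of_ord (x j)).-1 < n j.
Proof. by move: (ltn_ord (x j)); lia. Qed.

Definition par (x : V) : V :=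
  if [pick j | off x j] is Some j then upd x j (mv x j)
  else if 0 < nat_of_ord (x dl) then upd x dl (nat_of_ord (x dl)).-1 else x.

Definition L (x : V) := \sum_(j | j != dl) dis (x j) (c j).
Definition m (x : V) := L x + nat_of_ord (x dl).
Definition ax (x : V) : V := mk x (fun k => if k == dl then nat_of_ord (x dl) else c k).
Definition rootof (x : V) : V := mk x (fun k => if k == dl then 0 else c k).

Lemma axE (x : V) (k : 'I_d) : nat_of_ord (ax x k) = if k == dl then nat_of_ord (x dl) else c k.
Proof. by rewrite mkE //; case: eqP => [->|_]; [exact: ltn_ord|exact: c_lt]. Qed.
Lemma rootofE (x : V) (k : 'I_d) : nat_of_ord (rootof x k) = if k == dl then 0 else c k.
Proof. by rewrite mkE //; case: eqP => [->|_]; [exact: hn|exact: c_lt]. Qed.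

Lemma L_upd (x : V) (i : 'I_d) (v : nat) : i != dl -> v < n i -> L (upd x i v) + dis (x i) (c i) = L x + dis v (c i).
Proof.
move=> hi hv; rewrite /L (bigD1 i) //= [in RHS](bigD1 i) //= updE // eqxx.
have -> : \sum_(j | (j != dl) && (j != i)) dis (upd x i v j) (c j) =
          \sum_(j | (j != dl) && (j != i)) dis (x j) (c j).
  by apply: eq_bigr => j /andP[_ hj]; rewrite updE // (negbTE hj).
by rewrite [LHS]addnC [RHS]addnAC addnA.
Qed.

Lemma L_upd_dl (x : V) (v : nat) : v < n dl -> L (upd x dl v) = L x.
Proof. by move=> hv; apply: eq_bigr => j hj; rewrite updE // (negbTE hj). Qed.

Lemma dis_le_L (x : V) (j : 'I_d) : j != dl -> dis (x j) (c j) <= L x.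
Proof. by move=> hj; rewrite /L (bigD1 j) //= leq_addr. Qed.

Lemma nooff_L x : (forall j, ~~ off x j) -> L x = 0.
Proof.
move=> h; apply: big1 => j hj; move: (h j); rewrite /off hj /= negbK => /eqP.
by rewrite /dis; lia.
Qed.

Lemma L0_ax x : L x = 0 -> ax x = x.
Proof.
move=> h; apply: eq_grid => j; rewrite axE; case: eqP => [->//|/eqP hj].
by move: (dis_le_L x hj); rewrite h /dis; lia.
Qed.

Lemma m_par x : par x != x -> m (par x) < m x.
Proof.
rewrite /par /m; case: pickP => [j hj|hno].
  have hjd : j != dl by case/andP: hj.
  have := L_upd x hjd (mv_lt x j); have := mv_dis hj.
  have hdj : (dl == j) = false by rewrite eq_sym (negbTE hjd).
  by rewrite updE ?mv_lt // hdj; lia.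
case: ifP => h; last by rewrite eqxx.
by rewrite L_upd_dl ?pred_lt // updE ?pred_lt // eqxx; lia.
Qed.

Lemma grid_adj_sym (x y : V) : grid_adj x y -> grid_adj y x.
Proof.
case/existsP => i /andP[h1 /forallP h2]; apply/existsP; exists i.
rewrite orbC h1 /=; apply/forallP => j; apply/implyP => hj.
by move/implyP: (h2 j) => /(_ hj) /eqP ->.
Qed.

Lemma adj_upd (x : V) (i : 'I_d) (v : nat) : v < n i ->
  (v == (x i).+1) || (nat_of_ord (x i) == v.+1) -> grid_adj x (upd x i v).
Proof.
move=> hv h; apply/existsP; exists i; rewrite !valO updE // eqxx orbC h /=.
by apply/forallP => k; apply/implyP => hk; change (nat_of_ord (x k) == nat_of_ord (upd x i v k)); rewrite updE // (negbTE hk).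
Qed.

Lemma upd_neq (x : V) (i : 'I_d) (v : nat) : v < n i -> v != x i -> upd x i v != x.
Proof. move=> hv hne; apply/eqP => e; have := @updE x i v i hv; rewrite e eqxx => h. by rewrite h eqxx in hne. Qed.

Lemma par_adj x : par x != x -> grid_adj x (par x).
Proof.
rewrite /par; case: pickP => [j hj|hno].
  move=> _; apply: adj_upd; first exact: mv_lt.
  case/andP: hj => _ /eqP h; rewrite /mv; case: (ltnP (x j) (c j)) => h'.
    by rewrite eqxx.
  apply/orP; right; apply/eqP; lia.
case: ifP => h; last by rewrite eqxx.
by move=> _; apply: adj_upd; [exact: pred_lt|apply/orP; right; apply/eqP; lia].
Qed.

Lemma par_fix x : par x = x -> x = rootof x.
Proof.
rewrite /par; case: pickP => [j hj|hno].
  move=> e; have hne : mv x j != x j.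
    case/andP: hj => _ /eqP h; rewrite /mv; case: (ltnP (x j) (c j)) => h'; apply/eqP; lia.
  by move: (upd_neq (x:=x) (mv_lt x j) hne); rewrite e eqxx.
case: ifP => h.
  move=> e; have hne : (x dl).-1 != x dl by apply/eqP; lia.
  by move: (upd_neq (x:=x) (pred_lt x dl) hne); rewrite e eqxx.
move=> _; apply: eq_grid => j; rewrite rootofE; case: eqP => [->|/eqP hj].
  by move: h; rewrite lt0n => /negbFE/eqP.
by move: (hno j); rewrite /off hj /= => /negbFE/eqP.
Qed.

Lemma rootof_eq x y : rootof x = rootof y.
Proof. by apply: eq_grid => j; rewrite !rootofE. Qed.

Definition E : {set V * V} :=
  [set e | ((e.2 == par e.1) && (e.1 != par e.1)) || ((e.1 == par e.2) && (e.2 != par e.2))].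

Lemma erelE u v : erel E u v = ((v == par u) && (u != par u)) || ((u == par v) && (v != par v)).
Proof. by rewrite /erel inE. Qed.

Lemma erel_sym u v : erel E u v = erel E v u.
Proof. by rewrite !erelE orbC. Qed.

Lemma erel_par x : par x != x -> erel E x (par x) /\ erel E (par x) x.
Proof. move=> h; have h' : x != par x by rewrite eq_sym. by split; rewrite erelE eqxx h' ?orbT. Qed.

Lemma conn_root x : connect (erel E) x (rootof x).
Proof.
have : m x <= m x by [].
move: {2}(m x) => k; elim: k x => [|k IH] x hk.
  case: (eqVneq (par x) x) => [/par_fix <-|h]; first exact: connect0.
  by have := m_par h; lia.
case: (eqVneq (par x) x) => [/par_fix <-|h]; first exact: connect0.
apply: connect_trans (connect1 (proj1 (erel_par h))) _.
rewrite (rootof_eq x (par x)); apply: IH.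
by have := m_par h; lia.
Qed.

Lemma conn_all u v : connect (erel E) u v.
Proof.
have hs : connect_sym (erel E) by apply: sym_connect_sym => a b; rewrite erel_sym.
by apply: connect_trans (conn_root u) _; rewrite (rootof_eq u v) hs; exact: conn_root.
Qed.

Lemma no_cycle : ~ has_cycle (erel E).
Proof.
case=> cs [hsz hu hc]; case: cs hsz hu hc => [//|x0 s0] hsz hu hc.
case: (@arg_maxnP _ x0 (fun y => y \in x0 :: s0) m (mem_head _ _)) => v hv hmax.
case: (rot_to hv) => i s hrot.
have hc' : cycle (erel E) (v :: s) by rewrite -hrot rot_cycle.
have hu' : uniq (v :: s) by rewrite -hrot rot_uniq.
have hs' : 3 <= size (v :: s) by rewrite -hrot size_rot.
have hin : forall y, y \in v :: s -> m y <= m v.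
  by move=> y; rewrite -hrot mem_rot; exact: hmax.
clear hrot hc hu hsz hmax hv.
case: s hc' hu' hs' hin => [//|a s1] hc hu hs hin.
case: s1 hc hu hs hin => [//|x1 s2] hc hu hs hin.
move: hc; rewrite /= rcons_path /= => /andP[hva /andP[_ /andP[_ hbv]]].
have hbin : last x1 s2 \in x1 :: s2 by exact: mem_last.
have hba : last x1 s2 != a.
  move: hu; rewrite /= => /andP[_ /andP[ha _]].
  by apply/eqP => e; rewrite -e hbin in ha.
have ma : m a <= m v by apply: hin; rewrite !inE eqxx orbT.
have mb : m (last x1 s2) <= m v by apply: hin; rewrite inE; apply/orP; right; rewrite inE hbin orbT.
have ea : a = par v.
  move: hva; rewrite erelE => /orP[/andP[/eqP //]|/andP[/eqP e h]].
  have h' : par a != a by rewrite eq_sym.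
  by move: (m_par h'); rewrite -e; lia.
have eb : last x1 s2 = par v.
  move: hbv; rewrite erelE => /orP[/andP[/eqP e h]|/andP[/eqP //]].
  have h' : par (last x1 s2) != last x1 s2 by rewrite eq_sym.
  by move: (m_par h'); rewrite -e; lia.
by move: hba; rewrite ea eb eqxx.
Qed.

Lemma mv_neq x j : off x j -> mv x j != x j.
Proof. case/andP => _ /eqP h; rewrite /mv; case: (ltnP (x j) (c j)) => h'; apply/eqP; lia. Qed.

Lemma ax_upd x i v : i != dl -> v < n i -> ax (upd x i v) = ax x.
Proof.
move=> hi hv; apply: eq_grid => k; rewrite !axE updE //.
by have -> : (dl == i) = false by rewrite eq_sym (negbTE hi).
Qed.

Lemma par_off x : 0 < L x -> [/\ par x != x, L (par x) = (L x).-1 & ax (par x) = ax x].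
Proof.
rewrite /par; case: pickP => [j hj|hno] hL.
  have hjd : j != dl by case/andP: hj.
  split; first exact: upd_neq (mv_lt x j) (mv_neq hj).
    by have := L_upd x hjd (mv_lt x j); have := mv_dis hj; lia.
  exact: ax_upd (mv_lt x j).
by move: hL; rewrite nooff_L // => j; rewrite hno.
Qed.

Lemma walk_ax k : forall x, L x = k ->
  walk_len (erel E) x (ax x) k && walk_len (erel E) (ax x) x k.
Proof.
elim: k => [|k IH] x hL; first by rewrite L0_ax // walk0.
have [h1 h2 h3] := par_off (ltac:(by rewrite hL) : 0 < L x).
have hL' : L (par x) = k by rewrite h2 hL.
have [e1 e2] := erel_par h1.
have /andP[w1 w2] := IH _ hL'; rewrite h3 in w1 w2.
apply/andP; split.
  by rewrite -add1n; apply: walk_cat (walk1 e1) w1.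
by rewrite -addn1; apply: walk_cat w2 (walk1 e2).
Qed.

Definition D := \sum_(i < d.-1) n i %/ 2.

Lemma L_le x : L x <= D.
Proof.
rewrite /L /D -(@sum_but_last (fun i => n i %/ 2) d dl) //.
by apply: leq_sum => j _; move: (ltn_ord (x j)) (hn j); rewrite /dis /c; lia.
Qed.

Lemma vert (u v : V) : (forall j, j != dl -> nat_of_ord (u j) = v j) ->
  nat_of_ord (v dl) = (u dl).+1 -> par (ax v) = ax u /\ par (ax v) != ax v.
Proof.
move=> hj hv.
have hno : forall j, ~~ off (ax v) j.
  by move=> j; rewrite /off axE; case: eqP => //= _; rewrite eqxx.
have hpar : par (ax v) = upd (ax v) dl (ax v dl).-1.
  rewrite /par; case: pickP => [j hj'|_]; first by move: (hno j); rewrite hj'.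
  by rewrite axE eqxx hv.
rewrite hpar; split.
  apply: eq_grid => k; rewrite updE ?pred_lt // !axE.
  by case: eqP => // _; rewrite eqxx hv.
apply: upd_neq; first exact: pred_lt.
by rewrite axE eqxx hv; apply/eqP; lia.
Qed.

Lemma edge_bound (u v : V) : grid_adj u v -> gdist (erel E) u v <= 2 * D + 1.
Proof.
case/existsP => i /andP[hi /forallP hk].
have hk' : forall j, j != i -> nat_of_ord (u j) = v j.
  by move=> j hj; apply/eqP; exact: (implyP (hk j) hj).
have /andP[wu1 wu2] := walk_ax (erefl (L u)).
have /andP[wv1 wv2] := walk_ax (erefl (L v)).
have hu := L_le u; have hv := L_le v.
case: (eqVneq i dl) => [hidl|hidl].
  subst i.
  have ed : erel E (ax u) (ax v).
    case/orP: hi => /eqP h.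
      have [e1 e2] := vert (u:=v) (v:=u) (fun j hj => esym (hk' j hj)) h.
      by have [e3 _] := erel_par e2; rewrite e1 in e3.
    have [e1 e2] := vert hk' h.
    by have [_ e3] := erel_par e2; rewrite e1 in e3.
  apply: leq_trans (gdist_le (walk_cat (walk_cat wu1 (walk1 ed)) wv2)) _; lia.
have eax : ax u = ax v.
  by apply: eq_grid => k; rewrite !axE; case: eqP => // _; apply: hk'; rewrite eq_sym.
rewrite eax in wu1.
apply: leq_trans (gdist_le (walk_cat wu1 wv2)) _; lia.
Qed.

Lemma E_adj u v : erel E u v -> grid_adj u v.
Proof.
rewrite erelE => /orP[/andP[/eqP -> h]|/andP[/eqP -> h]].
  by apply: par_adj; rewrite eq_sym.
by apply: grid_adj_sym; apply: par_adj; rewrite eq_sym.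
Qed.

Lemma E_tree : spanning_tree (@grid_adj d n) E.
Proof.
split; [exact: erel_sym|exact: E_adj|exact: conn_all|exact: no_cycle].
Qed.
End Grid.

Theorem lemma4p1 (d : nat) (n : nat -> nat)
  (hd : 1 <= d)
  (hn2 : forall i, i < d -> 2 <= n i)
  (hmono : forall i j, i <= j -> j < d -> n i <= n j) :
  tree_stretch (@grid_adj d n) <= 2 * (\sum_(i < d.-1) n i %/ 2) + 1.
Proof.
have hn' : forall j : 'I_d, 0 < n j by move=> j; have := hn2 j (ltn_ord j); lia.
have hst := E_tree hd hn'.
rewrite /tree_stretch.
have hP : pbool (spanning_tree (@grid_adj d n) (E n hd)).
  by rewrite /pbool; case: (excluded_middle_informative _).
apply: leq_trans (bigmin_le _ _ (mem_index_enum (E n hd)) hP) _.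
rewrite /stretch; apply/bigmax_leqP => [[u v]] /= h.
exact: (edge_bound hd hn' h).
Qed.
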